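(* Let $G$ be a graph obtained as a $3$-clique-sum of graphs $G_1$ and $G_2$ along the clique $T=\{x_1,x_2,x_3\}$, and let $G_i'=G\cap G_i$ for $i=1,2$ (i.e. $G_i$ with those edges of $T$ that were deleted in forming $G$ removed). Let $k$ be an integer. Suppose that $G_1'$ has an AT-orientation $D_1'$ with maximum out-degree at most $k$, and that $G_2$ has an AT-orientation $D_2$ with maximum out-degree at most $k$ such that $d^+_{D_2}(x_1)=0$, $d^+_{D_2}(x_2)\leq 1$, $d^+_{D_2}(x_3)\leq 2$, and every out-neighbour in $D_2$ of each vertex of $T$ lies in $T$. Then $G$ has an AT-orientation $D$ with maximum out-degree at most $k$ such that $d^+_D(v)=d^+_{D_1'}(v)$ for every $v\in V(G_1)$.
   Context: Graphs are finite and simple. The clique-sum of graphs $G$ and $H$ each containing a clique of the same size is obtained from their disjoint union by identifying a clique of $G$ with a clique of $H$ of the same size and possibly deleting some edges of the identified clique; a $3$-clique-sum is one where the cliques have at most $3$ vertices. For an orientation $D$, $d^+_D(v)$ is the out-degree of $v$. An Eulerian subgraph of $D$ is a spanning subdigraph $H$ (not necessarily connected, possibly edgeless) with $d^-_H(v)=d^+_H(v)$ for all $v$; $EE(D)$ (resp. $OE(D)$) is the set of Eulerian subgraphs with an even (resp. odd) number of edges; $D$ is an AT-orientation if $|EE(D)|-|OE(D)|\neq 0$. *)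

(* Defs.v *)
From mathcomp Require Import all_boot.
Set Implicit Arguments. Unset Strict Implicit. Unset Printing Implicit Defensive.

Section Defs.
Variable V : finType.

Definition simple_graph_on (S : {set V}) (e : rel V) : Prop :=
  [/\ symmetric e, irreflexive e & forall u v, e u v -> (u \in S) && (v \in S)].

Definition restrict (e : rel V) (S : {set V}) : rel V :=
  [rel u v | [&& e u v, u \in S & v \in S]].

Definition is_clique (e : rel V) (T : {set V}) : Prop :=
  forall u v, u \in T -> v \in T -> u != v -> e u v.

Definition is_orientation (e d : rel V) : Prop :=
  (forall u v, d u v -> e u v) /\ (forall u v, e u v -> d u v (+) d v u).

Definition arcs (d : rel V) : {set V * V} := [set a | d a.1 a.2].

Definition outdeg (d : rel V) (v : V) : nat := #|[set w | d v w]|.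

(* Spanning Eulerian subdigraph given by its arc set A. *)
Definition eulerian_sub (d : rel V) (A : {set V * V}) : bool :=
  (A \subset arcs d) &&
  [forall v, #|[set a in A | a.2 == v]| == #|[set a in A | a.1 == v]|].

Definition EE (d : rel V) : {set {set V * V}} :=
  [set A | eulerian_sub d A & ~~ odd #|A|].
Definition OE (d : rel V) : {set {set V * V}} :=
  [set A | eulerian_sub d A & odd #|A|].

Definition AT_orientation (d : rel V) : bool := #|EE d| != #|OE d|.

End Defs.

(* Main.v *)
Require Import Defs.
From mathcomp Require Import all_boot.
From mathcomp Require Import all_algebra.
Import GRing.Theory Num.Theory.
Open Scope ring_scope.

Section H.
Variable V : finType.
Implicit Types (d : rel V) (A B C : {set V * V}) (X : {set V}).

Definition sgns d : int := \sum_(A | eulerian_sub d A) (-1) ^+ #|A|.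

Lemma AT_sgns d : AT_orientation d = (sgns d != 0).
Proof.
rewrite /AT_orientation /sgns (bigID (fun A => odd #|A|)) /=.
have -> : \sum_(A | eulerian_sub d A && odd #|A|) (-1) ^+ #|A| = \sum_(A in OE d) (-1 : int).
  apply: eq_big => A; first by rewrite !inE.
  by move=> /andP[_ o]; rewrite -signr_odd o expr1.
have -> : \sum_(A | eulerian_sub d A && ~~ odd #|A|) (-1) ^+ #|A| = \sum_(A in EE d) (1 : int).
  apply: eq_big => A; first by rewrite !inE.
  by move=> /andP[_ o]; rewrite -signr_odd (negbTE o) expr0.
rewrite !sumr_const addrC mulNrn subr_eq0 eqr_nat //.
Qed.

Lemma sgns_ext d d' : d =2 d' -> sgns d = sgns d'.
Proof.
move=> E; apply: eq_bigl => A; rewrite /eulerian_sub.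
suff -> : arcs d = arcs d' by [].
by apply/setP => a; rewrite !inE E.
Qed.

Lemma sgns_empty d : (forall u v, ~~ d u v) -> sgns d = 1.
Proof.
move=> E; rewrite /sgns (big_pred1 set0) ?cards0 ?expr0 // => A /=.
rewrite /eulerian_sub; apply/idP/idP.
  move=> /andP[sub _]; apply/eqP/setP => a; rewrite inE.
  apply/negP => aA; move/subsetP: sub => /(_ _ aA); rewrite inE.
  by rewrite (negbTE (E _ _)).
move/eqP->; rewrite sub0set /=; apply/forallP => v.
have E0 : forall p : pred (V * V), [set a in (set0 : {set V * V}) | p a] = set0.
  by move=> p; apply/setP => a; rewrite !inE.
by rewrite !E0.
Qed.

Definition bal A := [forall v, #|[set a in A | a.2 == v]| == #|[set a in A | a.1 == v]|].
Definition sq X : {set V * V} := [set a | (a.1 \in X) && (a.2 \in X)].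

Lemma eul_restrict d X A :
  eulerian_sub (restrict d X) A = [&& A \subset sq X, A \subset arcs d & bal A].
Proof.
rewrite /eulerian_sub -/(bal A) andbA; congr andb.
have -> : arcs (restrict d X) = sq X :&: arcs d.
  by apply/setP => a; rewrite !inE /= andbC.
by rewrite subsetI.
Qed.

Lemma selU A B (p : pred (V * V)) : (forall a, a \in B -> ~~ p a) ->
  [set a in A :|: B | p a] = [set a in A | p a].
Proof.
move=> H; apply/setP => a; rewrite !inE.
by case aB: (a \in B); rewrite ?orbF // orbT; have := H a aB; case: (p a); rewrite ?andbF.
Qed.

Lemma selU' A B (p : pred (V * V)) : (forall a, a \in A -> ~~ p a) ->
  [set a in A :|: B | p a] = [set a in B | p a].
Proof. by move=> H; rewrite setUC selU. Qed.

Lemma sel0 B (p : pred (V * V)) : (forall a, a \in B -> ~~ p a) ->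
  [set a in B | p a] = set0.
Proof.
move=> H; apply/setP => a; rewrite !inE.
by case aB: (a \in B) => //=; apply/negbTE/H.
Qed.

Lemma balU X A B : A \subset sq X -> B \subset sq (~: X) ->
  bal (A :|: B) = bal A && bal B.
Proof.
move=> /subsetP sA /subsetP sB.
apply/forallP/andP => [H|[/forallP HA /forallP HB] v].
  split; apply/forallP => v; have := H v; case vX: (v \in X).
  - rewrite !selU // => a /sB; rewrite !inE => /andP[h1 h2]; apply/negP => /eqP E;
    by move: h1 h2; rewrite E vX.
  - rewrite !(@sel0 A) ?cards0 // => a /sA; rewrite !inE => /andP[h1 h2];
    apply/negP => /eqP E; by move: h1 h2; rewrite E vX.
  - rewrite !(@sel0 B) ?cards0 // => a /sB; rewrite !inE => /andP[h1 h2];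
    apply/negP => /eqP E; by move: h1 h2; rewrite E vX.
  - rewrite !selU' // => a /sA; rewrite !inE => /andP[h1 h2]; apply/negP => /eqP E;
    by move: h1 h2; rewrite E vX.
case vX: (v \in X).
  rewrite !selU; first exact: HA.
    by move=> a /sB; rewrite !inE => /andP[h1 h2]; apply/negP => /eqP E;
      move: h1 h2; rewrite E vX.
  by move=> a /sB; rewrite !inE => /andP[h1 h2]; apply/negP => /eqP E;
    move: h1 h2; rewrite E vX.
rewrite !selU'; first exact: HB.
  by move=> a /sA; rewrite !inE => /andP[h1 h2]; apply/negP => /eqP E;
    move: h1 h2; rewrite E vX.
by move=> a /sA; rewrite !inE => /andP[h1 h2]; apply/negP => /eqP E;
  move: h1 h2; rewrite E vX.
Qed.

Lemma count_snd C X :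
  #|[set a in C | a.2 \in X]| = (\sum_(v in X) #|[set a in C | a.2 == v]|)%N.
Proof.
rewrite -sum1dep_card (partition_big snd (mem X)) /=; last by move=> a /andP[].
apply: eq_bigr => v vX; rewrite sum1dep_card; apply: eq_card => a; rewrite !inE.
by case: eqP => [->|]; rewrite ?vX ?andbT ?andbF.
Qed.

Lemma count_fst C X :
  #|[set a in C | a.1 \in X]| = (\sum_(v in X) #|[set a in C | a.1 == v]|)%N.
Proof.
rewrite -sum1dep_card (partition_big fst (mem X)) /=; last by move=> a /andP[].
apply: eq_bigr => v vX; rewrite sum1dep_card; apply: eq_card => a; rewrite !inE.
by case: eqP => [->|]; rewrite ?vX ?andbT ?andbF.
Qed.

Lemma cut d X C : (forall u v, d u v -> v \in X -> u \in X) ->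
  eulerian_sub d C -> forall a, a \in C -> a.1 \in X -> a.2 \in X.
Proof.
move=> H /andP[/subsetP sub /forallP B] a aC a1.
have eqc : #|[set a in C | a.2 \in X]| = #|[set a in C | a.1 \in X]|.
  rewrite count_snd count_fst; apply: eq_bigr => v _; exact/eqP/B.
have sIO : [set a in C | a.2 \in X] \subset [set a in C | a.1 \in X].
  apply/subsetP => b; rewrite !inE => /andP[bC b2]; rewrite bC /=.
  by apply: H b2; have := sub b bC; rewrite inE.
have := subset_cardP eqc sIO a; rewrite !inE aC a1 /=; by move->.
Qed.

Lemma sq_disj X a : a \in sq X -> a \in sq (~: X) -> False.
Proof. by rewrite !inE => /andP[-> _] /andP[]. Qed.

Lemma split_sgns d X : (forall u v, d u v -> v \in X -> u \in X) ->
  sgns d = sgns (restrict d X) * sgns (restrict d (~: X)).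
Proof.
move=> H; rewrite /sgns big_distrlr /= pair_big_dep /=.
rewrite (reindex_onto (fun p : {set V * V} * {set V * V} => p.1 :|: p.2)
          (fun C => (C :&: sq X, C :&: sq (~: X)))) /=; last first.
  move=> C eC; apply/setP => a; rewrite !inE.
  case aC: (a \in C) => //=.
  have h1 := @cut d X C H eC a aC.
  have h2 : a.2 \in X -> a.1 \in X.
    move: eC => /andP[/subsetP s _]; have := s a aC; rewrite inE; exact: H.
  by move: h1 h2; case: (a.1 \in X); case: (a.2 \in X) => //= h1 h2; first [by apply: h1 | by apply: h2].
apply: eq_big => [[A B]|[A B]] /=.
  rewrite !eul_restrict; apply/idP/idP.
    move=> /andP[/andP[sub bl] /eqP[eA eB]].
    have sA : A \subset sq X by rewrite -eA subsetIr.
    have sB : B \subset sq (~: X) by rewrite -eB subsetIr.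
    move: sub bl; rewrite subUset -/(bal _) (@balU X A B sA sB) => /andP[-> ->] /andP[-> ->].
    by rewrite sA sB.
  move=> /andP[/and3P[sA subA bA] /and3P[sB subB bB]].
  rewrite /eulerian_sub -/(bal _) subUset subA subB (@balU X A B sA sB) bA bB /=.
  move/subsetP: sA => sA; move/subsetP: sB => sB.
  apply/eqP; congr pair; apply/setP => a; rewrite in_setI in_setU.
    case aA: (a \in A); first by rewrite sA.
    case aB: (a \in B) => //=; apply/negP => aX.
    by move: aX (sB a aB); rewrite !inE => /andP[-> _] /andP[].
  case aB: (a \in B); first by rewrite sB ?orbT.
  case aA: (a \in A) => //=; apply/negP => aX.
  by move: (sA a aA) aX; rewrite !inE => /andP[-> _] /andP[].
move=> /andP[_ /eqP[eA eB]].
have /subsetP sA : A \subset sq X by rewrite -eA subsetIr.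
have /subsetP sB : B \subset sq (~: X) by rewrite -eB subsetIr.
have dis : A :&: B = set0.
  apply/setP => a; rewrite in_setI in_set0.
  case aA: (a \in A) => //=; apply/negP => aB.
  by move: (sA a aA) (sB a aB); rewrite !inE => /andP[-> _] /andP[].
by rewrite cardsU dis cards0 subn0 exprD.
Qed.
End H.
Arguments sgns {V}. Arguments sgns_ext {V}. Arguments sgns_empty {V}. Arguments AT_sgns {V}.

Close Scope ring_scope.

Theorem lemma2p4 (V : finType) (S1 S2 : {set V}) (x1 x2 x3 : V)
    (e1 e2 e : rel V) (k : nat) (d1 d2 : rel V) :
  x1 != x2 -> x1 != x3 -> x2 != x3 ->
  S1 :&: S2 = [set x1; x2; x3] ->
  S1 :|: S2 = [set: V] ->
  simple_graph_on S1 e1 -> simple_graph_on S2 e2 ->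
  is_clique e1 [set x1; x2; x3] -> is_clique e2 [set x1; x2; x3] ->
  simple_graph_on [set: V] e ->
  (forall u v, e u v -> e1 u v || e2 u v) ->
  (forall u v, ~~ ((u \in [set x1; x2; x3]) && (v \in [set x1; x2; x3])) ->
     e1 u v || e2 u v -> e u v) ->
  is_orientation (restrict e S1) d1 -> AT_orientation d1 ->
  (forall v, outdeg d1 v <= k) ->
  is_orientation e2 d2 -> AT_orientation d2 ->
  (forall v, outdeg d2 v <= k) ->
  outdeg d2 x1 = 0 -> outdeg d2 x2 <= 1 -> outdeg d2 x3 <= 2 ->
  (forall t w, t \in [set x1; x2; x3] -> d2 t w -> w \in [set x1; x2; x3]) ->
  exists d : rel V,
    [/\ is_orientation e d, AT_orientation d,
        (forall v, outdeg d v <= k) &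
        (forall v, v \in S1 -> outdeg d v = outdeg d1 v)].
Proof.

move=> n12 n13 n23 HI HU [_ irr1 in1] [sym2 irr2 in2] cl1 cl2 [syme irre _]
  ee12 e12e [o1a o1b] AT1 deg1 [o2a o2b] AT2 deg2 dx1 dx2 dx3 Tout.
set T := [set x1; x2; x3] in HI cl1 cl2 e12e Tout *.
have TS : forall t, t \in T -> (t \in S1) && (t \in S2).
  by move=> t; rewrite -HI inE.
have inT : forall u, u \in S1 -> u \in S2 -> u \in T.
  by move=> u h1 h2; rewrite -HI inE h1 h2.
have nS1 : forall u, u \notin S1 -> u \in S2.
  move=> u h; have : u \in S1 :|: S2 by rewrite HU inE.
  by rewrite inE (negbTE h).
have d1S : forall u v, d1 u v -> (u \in S1) && (v \in S1).
  by move=> u v /o1a /and3P[_ -> ->].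
have d2S : forall u v, d2 u v -> (u \in S2) && (v \in S2).
  by move=> u v /o2a /in2.
have d2irr : forall u, ~~ d2 u u.
  by move=> u; apply/negP => /o2a; rewrite irr2.
pose d : rel V := fun u v => if (u \in S1) && (v \in S1) then d1 u v else d2 u v.
have outS1 : forall v, v \in S1 -> outdeg d v = outdeg d1 v.
  move=> v vS; rewrite /outdeg; apply: eq_card => w; rewrite !inE /d vS /=.
  case wS: (w \in S1) => //.
  have -> : d1 v w = false by apply/negP => /d1S; rewrite wS andbF.
  apply/negP => h; have /andP[v2 _] := d2S _ _ h.
  have := Tout _ _ (inT _ vS v2) h => /TS; by rewrite wS.
have outS2 : forall v, v \notin S1 -> outdeg d v = outdeg d2 v.
  move=> v vS; rewrite /outdeg; apply: eq_card => w; rewrite !inE /d.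
  by rewrite (negbTE vS).
have nx1 : forall w, ~~ d2 x1 w.
  move=> w; apply/negP => h.
  have : w \in [set w | d2 x1 w] by rewrite inE.
  by rewrite (cards0_eq dx1) inE.
have Tin : forall t, t \in T = [|| t == x1, t == x2 | t == x3].
  by move=> t; rewrite !inE orbA.
have x1T : x1 \in T by rewrite Tin eqxx.
have x2T : x2 \in T by rewrite Tin eqxx orbT.
have x3T : x3 \in T by rewrite Tin eqxx !orbT.
have d21 : d2 x2 x1.
  have n21 : x2 != x1 by rewrite eq_sym.
  have := o2b _ _ (cl2 _ _ x2T x1T n21).
  by rewrite (negbTE (nx1 _)) addbF.
have nx23 : ~~ d2 x2 x3.
  apply/negP => h.
  have : #|[set x1; x3]| <= outdeg d2 x2.
    apply: subset_leq_card; apply/subsetP => w; rewrite !inE.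
    by case/orP => /eqP ->.
  by rewrite cards2 n13 => h2; have := leq_trans h2 dx2.
exists d; split.
- split.
    move=> u v; rewrite /d; case: ifP => [uv /o1a /and3P[] //|uv h].
    apply: e12e; last by rewrite (o2a _ _ h) orbT.
    apply/negP => /andP[/TS/andP[u1 _] /TS/andP[v1 _]].
    by rewrite u1 v1 in uv.
  move=> u v euv; rewrite /d [(v \in S1) && _]andbC.
  case: ifP => uv; first by apply: o1b; rewrite /restrict /= euv.
  apply: o2b; have := ee12 _ _ euv; case/orP => // /in1.
  by rewrite uv.
- rewrite AT_sgns.
  have H1 : forall u v, d u v -> v \in ~: S1 -> u \in ~: S1.
    move=> u v; rewrite /d !inE; case vS: (v \in S1); rewrite ?andbF //= => h _.
    apply/negP => uS; have /andP[u2 _] := d2S _ _ h.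
    have /TS := Tout _ _ (inT _ uS u2) h; by rewrite vS.
  rewrite (@split_sgns _ d (~: S1) H1) setCK.
  have E1 : sgns (restrict d S1) = sgns d1.
    apply: sgns_ext => u v; rewrite /restrict /d /=.
    case uS: (u \in S1); case vS: (v \in S1); rewrite /= ?andbF ?andbT //;
    apply/esym/negP => /d1S; by rewrite uS vS.
  have E2 : sgns (restrict d (~: S1)) = sgns (restrict d2 (~: T)).
    apply: sgns_ext => u v; rewrite /restrict /d /= !in_setC.
    case uS: (u \in S1); case vS: (v \in S1); rewrite /= ?andbF.
    1-3: apply/esym/negP => /and3P[h uT vT]; have /andP[u2 v2] := d2S _ _ h;
      first [by rewrite (inT _ uS u2) in uT | by rewrite (inT _ vS v2) in vT].
    have uT : u \notin T by apply/negP => /TS; rewrite uS.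
    have vT : v \notin T by apply/negP => /TS; rewrite vS.
    by rewrite uT vT.
  have H2 : forall u v, d2 u v -> v \in ~: T -> u \in ~: T.
    move=> u v h; rewrite !in_setC; apply: contra => uT; exact: Tout h.
  have Tsplit := @split_sgns _ d2 (~: T) H2.
  rewrite setCK in Tsplit.
  have H3 : forall u v, restrict d2 T u v -> v \in [set x3] -> u \in [set x3].
    move=> u v /and3P[h uT _]; rewrite !inE => /eqP ev; rewrite ev in h.
    move: uT; rewrite Tin => /or3P[/eqP eu|/eqP eu|/eqP eu]; rewrite eu in h.
    - by rewrite (negbTE (nx1 _)) in h.
    - by rewrite (negbTE nx23) in h.
    - by rewrite eu.
  have H4 : forall u v, restrict (restrict d2 T) (~: [set x3]) u v ->
      v \in [set x2] -> u \in [set x2].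
    move=> u v /and3P[/and3P[h uT _] ux3 _]; rewrite !inE => /eqP ev; rewrite ev in h.
    move: ux3; rewrite !inE.
    move: uT; rewrite Tin => /or3P[/eqP eu|/eqP eu|/eqP eu]; rewrite eu in h *.
    - by rewrite (negbTE (nx1 _)) in h.
    - by rewrite eqxx.
    - by rewrite eqxx.
  have E3 : sgns (restrict d2 T) = 1.
    rewrite (@split_sgns _ _ [set x3] H3) (@split_sgns _ _ [set x2] H4).
    rewrite !sgns_empty ?mul1r //.
    - move=> u v; apply/negP => /and3P[/and3P[/and3P[h uT vT] ux3 vx3] ux2 vx2].
      move: uT vT ux3 vx3 ux2 vx2; rewrite !Tin !inE.
      case/or3P=> /eqP eu; case/or3P=> /eqP ev; rewrite ?eu ?ev ?eqxx //= => _ _ _ _.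
      by move: h; rewrite eu ev (negbTE (d2irr _)).
    - move=> u v; apply/negP => /and3P[/and3P[/and3P[h _ _] _ _] ].
      rewrite !inE => /eqP eu /eqP ev.
      by move: h; rewrite eu ev (negbTE (d2irr _)).
    - move=> u v; apply/negP => /and3P[/and3P[h _ _] ].
      rewrite !inE => /eqP eu /eqP ev.
      by move: h; rewrite eu ev (negbTE (d2irr _)).
  rewrite E1 E2.
  have -> : sgns (restrict d2 (~: T)) = sgns d2 by rewrite Tsplit E3 mulr1.
  by rewrite mulf_neq0 // -AT_sgns.
- move=> v; case vS: (v \in S1); first by rewrite outS1.
  by rewrite outS2 ?vS.
- exact: outS1.
Qed.
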